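(* Let $U,V$ be $\mathrm{OST}$-monoids and $\alpha:U\to V$ a surjective monotone transmission, and let $\alpha=\rho\circ\mu\circ\beta\circ\lambda$ with $\lambda:U\to\bar U$, $\beta:\bar U\to W$, $\mu:W\to\bar W$, $\rho:\bar W\to V$ be a canonical factorization of $\alpha$. Then the supertropical monoids $\bar U,W,\bar W$ can be equipped with total orderings, in a unique way, such that they become $\mathrm{OST}$-monoids and all factors $\lambda,\beta,\mu,\rho$ are monotone transmissions.
   Context: A supertropical monoid is a commutative monoid $(U,\cdot)$ with absorbing element $0$ and distinguished idempotent $e$ with $ex=0\Rightarrow x=0$, together with a total ordering $\le_M$ on $M:=eU$, compatible with multiplication and with $0$ least, making $M$ a bipotent semiring (addition $=\max$). A transmission $\alpha:U\to V$ is a map with $\alpha(0)=0$, $\alpha(1)=1$, multiplicative, $\alpha(e_U)=e_V$, order-preserving on $eU$; ghost part $\gamma:=\alpha^\nu$ its restriction $eU\to eV$; ghost kernel $\mathfrak A_\alpha:=\{x:\alpha(x)\in eV\}$. An OST-monoid is a supertropical monoid with a total ordering $\le$ on $U$ such that $x\le y\Rightarrow xz\le yz$, $\le$ restricts to $\le_M$ on $M$, and $0\le1\le e$. A transmission between OST-monoids is monotone if $x\le y\Rightarrow\alpha(x)\le\alpha(y)$. Canonical factorization of a surjective transmission $\alpha$ with $N:=eV$: a factorization $\alpha=\rho\circ\mu\circ\beta\circ\lambda$ in which, up to isomorphisms over the ghost ideals, $\lambda=\pi_{E(U,\mathfrak A_\alpha)}:U\to\bar U=U/E(U,\mathfrak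 A_\alpha)$, $\beta=\pi_{F(\bar U,\gamma)}:\bar U\to W=\bar U/F(\bar U,\gamma)$, $\mu=\pi_T:W\to\bar W=W/T$ for a tangible MFCE-relation $T$ on $W$, and $\rho:\bar W\to V$ is an isomorphism of supertropical monoids whose ghost part is $\mathrm{id}_N$. Here quotients by TE-relations carry the unique supertropical monoid structure making the projection a transmission; $E(U,\mathfrak A)$ ($\mathfrak A\supseteq M$ an ideal): $x\sim y$ iff $x=y$ or ($x,y\in\mathfrak A$, $ex=ey$); $F(\bar U,\gamma)$: $x\sim y$ iff $x=y$, or $x,y\in M$ with $\gamma(x)=\gamma(y)$, or $\gamma(ex)=\gamma(ey)=0$ (ghost ideal of quotient identified with $N$); an MFCE-relation is a multiplicative equivalence relation with $x\sim y\Rightarrow ex=ey$, tangible if ghosts are equivalent only to themselves. *)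

(* Defs.v *)
Set Implicit Arguments.

(** A supertropical monoid: a commutative monoid with absorbing 0, a
    distinguished idempotent [e] with [e x = 0 -> x = 0], and a total
    ordering [leM] on the ghost ideal [M = eU], compatible with
    multiplication and with 0 least.  [leM] is only meaningful on ghosts. *)
Record stmonoid := STMonoid {
  car :> Type;
  mul : car -> car -> car;
  one : car;
  zero : car;
  ee : car;
  leM : car -> car -> Prop;
  mulA : forall x y z, mul x (mul y z) = mul (mul x y) z;
  mulC : forall x y, mul x y = mul y x;
  mul1 : forall x, mul one x = x;
  mul0 : forall x, mul zero x = zero;
  ee_idem : mul ee ee = ee;
  ee_zero : forall x, mul ee x = zero -> x = zero;
  leM_refl : forall x, (exists a, x = mul ee a) -> leM x x;
  leM_antisym : forall x y, (exists a, x = mul ee a) -> (exists b, y = mul ee b) ->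
      leM x y -> leM y x -> x = y;
  leM_trans : forall x y z, (exists a, x = mul ee a) -> (exists b, y = mul ee b) ->
      (exists c, z = mul ee c) -> leM x y -> leM y z -> leM x z;
  leM_total : forall x y, (exists a, x = mul ee a) -> (exists b, y = mul ee b) ->
      leM x y \/ leM y x;
  leM_mul : forall x y z, (exists a, x = mul ee a) -> (exists b, y = mul ee b) ->
      (exists c, z = mul ee c) -> leM x y -> leM (mul x z) (mul y z);
  leM_zero : forall x, (exists a, x = mul ee a) -> leM zero x
}.

Arguments mul {s}.
Arguments one {s}.
Arguments zero {s}.
Arguments ee {s}.
Arguments leM {s}.

Definition ghost {U : stmonoid} (x : U) : Prop := exists a : U, x = mul ee a.

Definition transmission {U V : stmonoid} (f : U -> V) : Prop :=
  f zero = zero /\ f one = one /\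
  (forall x y, f (mul x y) = mul (f x) (f y)) /\
  f ee = ee /\
  (forall x y : U, ghost x -> ghost y -> leM x y -> leM (f x) (f y)).

Definition st_iso {U V : stmonoid} (f : U -> V) : Prop :=
  transmission f /\ exists g : V -> U, transmission g /\
    (forall x, g (f x) = x) /\ (forall y, f (g y) = y).

Definition surjective {A B : Type} (f : A -> B) : Prop := forall y, exists x, f x = y.

Definition OST {U : stmonoid} (le : U -> U -> Prop) : Prop :=
  (forall x, le x x) /\
  (forall x y, le x y -> le y x -> x = y) /\
  (forall x y z, le x y -> le y z -> le x z) /\
  (forall x y, le x y \/ le y x) /\
  (forall x y z, le x y -> le (mul x z) (mul y z)) /\
  (forall x y : U, ghost x -> ghost y -> (le x y <-> leM x y)) /\
  le zero one /\ le one ee.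

Definition monotone {U V : stmonoid} (leU : U -> U -> Prop) (leV : V -> V -> Prop)
  (f : U -> V) : Prop := forall x y, leU x y -> leV (f x) (f y).

Definition ghost_kernel {U V : stmonoid} (f : U -> V) (x : U) : Prop := ghost (f x).

Definition Erel {U : stmonoid} (A : U -> Prop) (x y : U) : Prop :=
  x = y \/ (A x /\ A y /\ mul ee x = mul ee y).

(** The relation [F(Ubar, gamma)] on [Ubar = U / E(U, A_alpha)], where the
    ghost ideal of [Ubar] is identified with [M = eU] via [lam] (so the
    ghost part [gamma : M -> N] of [alpha] is read on [eUbar] as
    [gamma (lam m) = alpha m] for [m] in [M]). *)
Definition Frel {U Ub V : stmonoid} (lam : U -> Ub) (alpha : U -> V) (x y : Ub) : Prop :=
  x = y
  \/ (ghost x /\ ghost y /\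
      exists m m' : U, ghost m /\ ghost m' /\ lam m = x /\ lam m' = y /\ alpha m = alpha m')
  \/ ((exists m : U, ghost m /\ lam m = mul ee x /\ alpha m = zero) /\
      (exists m : U, ghost m /\ lam m = mul ee y /\ alpha m = zero)).

Definition MFCE {W : stmonoid} (R : W -> W -> Prop) : Prop :=
  (forall x, R x x) /\ (forall x y, R x y -> R y x) /\
  (forall x y z, R x y -> R y z -> R x z) /\
  (forall x y z, R x y -> R (mul x z) (mul y z)) /\
  (forall x y, R x y -> mul ee x = mul ee y).

Definition tangible_rel {W : stmonoid} (R : W -> W -> Prop) : Prop :=
  forall x y : W, ghost x -> R x y -> y = x.

(** Canonical factorization [alpha = rho o mu o beta o lam]: each of
    [lam, beta, mu] is (up to isomorphism over the ghost ideals) the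
    projection onto the quotient by the indicated relation, i.e. a
    surjective transmission whose fibre relation is exactly that relation;
    [rho] is an isomorphism (its ghost part is then [id_N] by the
    factorization identity). *)
Definition canonical_factorization {U Ub W Wb V : stmonoid} (alpha : U -> V)
  (lam : U -> Ub) (beta : Ub -> W) (mu : W -> Wb) (rho : Wb -> V) : Prop :=
  (forall x, alpha x = rho (mu (beta (lam x)))) /\
  (transmission lam /\ surjective lam /\
     forall x y, lam x = lam y <-> Erel (ghost_kernel alpha) x y) /\
  (transmission beta /\ surjective beta /\
     forall x y, beta x = beta y <-> Frel lam alpha x y) /\
  (transmission mu /\ surjective mu /\
     MFCE (fun x y => mu x = mu y) /\ tangible_rel (fun x y => mu x = mu y)) /\
  st_iso rho /\
  (forall m : U, ghost m -> rho (mu (beta (lam m))) = alpha m).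

(* Main.v *)
Require Import Defs.
Set Implicit Arguments.
From Stdlib Require Import Classical.

Definition ind {X Y : stmonoid} (leX : X -> X -> Prop) (f : X -> Y) (y1 y2 : Y) : Prop :=
  y1 = y2 \/ forall a b, f a = y1 -> f b = y2 -> leX a b.

Definition convex {X Y : stmonoid} (leX : X -> X -> Prop) (f : X -> Y) : Prop :=
  forall a b c, leX a b -> leX b c -> f a = f c -> f b = f a.

Lemma ghost_idem (V : stmonoid) (v : V) : ghost v -> mul ee v = v.
Proof. intros [t ->]. rewrite mulA, ee_idem. reflexivity. Qed.

Lemma ghost_e (V : stmonoid) (v : V) : ghost (mul ee v).
Proof. exists v; reflexivity. Qed.

Lemma ind_OST (X Y : stmonoid) (leX : X -> X -> Prop) (f : X -> Y) :
  OST leX -> transmission f -> surjective f -> convex leX f -> OST (ind leX f).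
Proof.
  intros HX Hf Hs Hc.
  destruct HX as [Xr [Xa [Xt [Xto [Xm [Xg [Xz Xe]]]]]]].
  destruct Hf as [f0 [f1 [fm [fe fl]]]].
  assert (sep : forall a b a' b', f a <> f b -> leX a b -> f a' = f a -> f b' = f b ->
            leX a' b').
  { intros a b a' b' Hne Hab Ha Hb.
    destruct (Xto a' b') as [H|H]; [exact H|exfalso].
    destruct (Xto a' b) as [H2|H2].
    - apply Hne. pose proof (Hc b' a' b H H2 Hb). congruence.
    - apply Hne. pose proof (Hc a b a' Hab H2 (eq_sym Ha)). congruence. }
  assert (tot : forall y1 y2, ind leX f y1 y2 \/ ind leX f y2 y1).
  { intros y1 y2. destruct (classic (y1 = y2)) as [E|E]; [left; left; exact E|].
    destruct (Hs y1) as [a Ha]; destruct (Hs y2) as [b Hb].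
    destruct (Xto a b) as [H|H].
    - left; right. intros a' b' Ha' Hb'. subst.
      apply (sep a b); auto; congruence.
    - right; right. intros a' b' Ha' Hb'. subst.
      apply (sep b a); auto; congruence. }
  assert (mono : forall a b, leX a b -> ind leX f (f a) (f b)).
  { intros a b H. destruct (tot (f a) (f b)) as [H2|[H2|H2]]; auto.
    - left; auto.
    - left. rewrite (Xa a b H (H2 b a eq_refl eq_refl)). reflexivity. }
  assert (gh : forall y, ghost y -> exists s, ghost s /\ f s = y).
  { intros y [t ->]. destruct (Hs t) as [s <-]. exists (mul ee s). split.
    apply ghost_e. rewrite fm, fe. reflexivity. }
  assert (g1 : forall x y, ghost x -> ghost y -> ind leX f x y -> leM x y).
  { intros x y Gx Gy [H|H].
    - subst. apply leM_refl. exact Gx.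
    - destruct (gh x Gx) as [s [Gs Hs']]. destruct (gh y Gy) as [s' [Gs' Hs'']].
      subst. apply fl; auto. apply (proj1 (Xg s s' Gs Gs')). apply H; auto. }
  repeat split.
  - intros x. left; reflexivity.
  - intros x y [K|K] [K'|K']; auto.
    destruct (Hs x) as [a Ha]; destruct (Hs y) as [b Hb].
    subst. rewrite (Xa a b (K a b eq_refl eq_refl) (K' b a eq_refl eq_refl)). reflexivity.
  - intros x y z [H|H] [H'|H'].
    + subst. left; reflexivity.
    + subst. right; exact H'.
    + subst. right; exact H.
    + right. intros a c Ha Hc'. destruct (Hs y) as [b Hb].
      apply (Xt a b c); auto.
  - exact tot.
  - intros x y z [H|H].
    + subst. left; reflexivity.
    + destruct (Hs x) as [a Ha]; destruct (Hs y) as [b Hb]; destruct (Hs z) as [c Hc'].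
      subst. rewrite <- !fm. apply mono. apply Xm. apply H; auto.
  - intros Hxy. apply g1; auto.
  - intros Hxy. destruct (tot x y) as [K|K]; auto.
    pose proof (g1 y x H0 H K) as K'.
    left. apply leM_antisym; auto.
  - rewrite <- f0, <- f1. apply mono; auto.
  - rewrite <- f1, <- fe. apply mono; auto.
Qed.

Lemma ind_mono (X Y : stmonoid) (leX : X -> X -> Prop) (f : X -> Y) :
  OST leX -> OST (ind leX f) -> forall a b, leX a b -> ind leX f (f a) (f b).
Proof.
  intros HX HY a b H.
  destruct HX as [Xr [Xa _]]. destruct HY as [_ [_ [_ [tot _]]]].
  destruct (tot (f a) (f b)) as [H2|[H2|H2]]; auto.
  - left; auto.
  - left. rewrite (Xa a b H (H2 b a eq_refl eq_refl)). reflexivity.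
Qed.

Lemma ind_through (X Y Z : stmonoid) (leX : X -> X -> Prop) (f : X -> Y) (f' : X -> Z)
  (h : Y -> Z) : OST leX -> OST (ind leX f') -> surjective f ->
  (forall u, h (f u) = f' u) -> monotone (ind leX f) (ind leX f') h.
Proof.
  intros HX HZ Hs Hh x y [H|H].
  - subst. left; reflexivity.
  - destruct (Hs x) as [a <-]; destruct (Hs y) as [b <-].
    rewrite !Hh. apply ind_mono; auto.
Qed.

Lemma uniq_le (X Y : stmonoid) (leA leA' : X -> X -> Prop) (le le' : Y -> Y -> Prop)
  (f : X -> Y) : surjective f -> OST leA -> (forall a b, leA a b -> leA' a b) ->
  OST le -> OST le' -> monotone leA le f -> monotone leA' le' f ->
  forall x y, le x y -> le' x y.
Proof.
  intros Hs HA HAA' H H' M M' x y Hxy.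
  destruct (classic (x = y)) as [E|E].
  - subst. apply (proj1 H').
  - destruct (Hs x) as [a <-]; destruct (Hs y) as [b <-].
    destruct HA as [_ [_ [_ [tot _]]]].
    destruct (tot a b) as [Hab|Hab].
    + apply M'. apply HAA'. exact Hab.
    + exfalso. apply E. destruct H as [_ [Ha _]]. apply Ha; auto.
Qed.

Lemma trans_comp (X Y Z : stmonoid) (f : X -> Y) (g : Y -> Z) :
  transmission f -> transmission g -> transmission (fun u => g (f u)).
Proof.
  intros [f0 [f1 [fm [fe fl]]]] [g0 [g1 [gm [ge gl]]]].
  repeat split.
  - rewrite f0; exact g0.
  - rewrite f1; exact g1.
  - intros x y; rewrite fm, gm; reflexivity.
  - rewrite fe; exact ge.
  - intros x y Gx Gy H. apply gl.
    + destruct Gx as [t ->]. rewrite fm, fe. apply ghost_e.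
    + destruct Gy as [t ->]. rewrite fm, fe. apply ghost_e.
    + apply fl; auto.
Qed.

Lemma surj_comp (X Y Z : Type) (f : X -> Y) (g : Y -> Z) :
  surjective f -> surjective g -> surjective (fun u => g (f u)).
Proof.
  intros Hf Hg z. destruct (Hg z) as [y <-]. destruct (Hf y) as [x <-]. exists x; reflexivity.
Qed.

Theorem theorem61p14 (U V : stmonoid) (leU : U -> U -> Prop) (leV : V -> V -> Prop)
  (alpha : U -> V)
  (HU : OST leU) (HV : OST leV)
  (Halpha : transmission alpha) (Hsurj : surjective alpha)
  (Hmono : monotone leU leV alpha)
  (Ub W Wb : stmonoid) (lam : U -> Ub) (beta : Ub -> W) (mu : W -> Wb) (rho : Wb -> V)
  (Hfact : canonical_factorization alpha lam beta mu rho) :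
  (exists (leUb : Ub -> Ub -> Prop) (leW : W -> W -> Prop) (leWb : Wb -> Wb -> Prop),
      OST leUb /\ OST leW /\ OST leWb /\
      monotone leU leUb lam /\ monotone leUb leW beta /\
      monotone leW leWb mu /\ monotone leWb leV rho) /\
  (forall (le1 le1' : Ub -> Ub -> Prop) (le2 le2' : W -> W -> Prop)
          (le3 le3' : Wb -> Wb -> Prop),
      OST le1 /\ OST le2 /\ OST le3 /\
      monotone leU le1 lam /\ monotone le1 le2 beta /\
      monotone le2 le3 mu /\ monotone le3 leV rho ->
      OST le1' /\ OST le2' /\ OST le3' /\
      monotone leU le1' lam /\ monotone le1' le2' beta /\
      monotone le2' le3' mu /\ monotone le3' leV rho ->
      (forall x y, le1 x y <-> le1' x y) /\
      (forall x y, le2 x y <-> le2' x y) /\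
      (forall x y, le3 x y <-> le3' x y)).
Proof.
  destruct Hfact as [Hcomp [[Tl [Sl El]] [[Tb [Sb Eb]] [[Tm [Sm _]] [[Tr [g [Tg [gr rg]]]] _]]]]].
  split.
  2:{
    intros le1 le1' le2 le2' le3 le3' [O1 [O2 [O3 [M1 [M2 [M3 _]]]]]]
      [O1' [O2' [O3' [M1' [M2' [M3' _]]]]]].
    assert (E1 : forall x y, le1 x y <-> le1' x y).
    { intros x y; split.
      - apply (uniq_le Sl HU (fun a b h => h) O1 O1' M1 M1').
      - apply (uniq_le Sl HU (fun a b h => h) O1' O1 M1' M1). }
    assert (E2 : forall x y, le2 x y <-> le2' x y).
    { intros x y; split.
      - apply (uniq_le Sb O1 (fun a b => proj1 (E1 a b)) O2 O2' M2 M2').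
      - apply (uniq_le Sb O1' (fun a b => proj2 (E1 a b)) O2' O2 M2' M2). }
    split; [exact E1|split; [exact E2|]].
    intros x y; split.
    - apply (uniq_le Sm O2 (fun a b => proj1 (E2 a b)) O3 O3' M3 M3').
    - apply (uniq_le Sm O2' (fun a b => proj2 (E2 a b)) O3' O3 M3' M3).
  }
  pose proof HU as HU'.
  destruct HU' as [Ur [Ua [Ut [Uto [Um [Ug [Uz Ue]]]]]]].
  pose proof HV as HV'.
  destruct HV' as [Vr [Va [Vt [Vto [Vm [Vg [Vz Ve]]]]]]].
  pose proof Halpha as Ha'.
  destruct Ha' as [a0 [a1 [am [ae al]]]].
  pose proof Tl as Tl'.
  destruct Tl' as [l0 [l1 [lm [le ll]]]].
  assert (squeeze : forall p q r, leV p q -> leV q r -> p = r -> q = p).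
  { intros p q r H1 H2 ->. apply Va; auto. }
  assert (alpha_e : forall x, alpha (mul ee x) = mul ee (alpha x)).
  { intros x; rewrite am, ae; reflexivity. }
  assert (mulE : forall a b, leU a b -> leU (mul ee a) (mul ee b)).
  { intros a b H. rewrite (mulC _ ee a), (mulC _ ee b). apply Um; exact H. }
  assert (Amono : forall a b c, leU a b -> leU b c -> alpha a = alpha c -> alpha b = alpha a).
  { intros a b c H1 H2 H3. apply (squeeze _ _ (alpha c)); auto. }
  assert (L : forall m x, lam m = lam x -> ghost (alpha m) -> alpha x = alpha m).
  { intros m x H Gm. apply El in H. destruct H as [->|[G1 [G2 He]]]; auto.
    unfold ghost_kernel in *.
    rewrite <- (ghost_idem G2), <- (ghost_idem G1), <- !alpha_e, He. reflexivity. }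
  assert (lamg : forall b, ghost (alpha b) -> lam b = lam (mul ee b)).
  { intros b Gb. apply El. right. unfold ghost_kernel. split; [exact Gb|split].
    - rewrite alpha_e. apply ghost_e.
    - rewrite mulA, ee_idem. reflexivity. }
  assert (C1 : convex leU lam).
  { intros a b c H1 H2 H3. apply El in H3 as H3'.
    destruct H3' as [<-|[G1 [G2 He]]].
    - rewrite (Ua a b H1 H2). reflexivity.
    - unfold ghost_kernel in *.
      assert (Heb : mul ee b = mul ee a).
      { apply Ua. rewrite He. apply mulE; exact H2. apply mulE; exact H1. }
      assert (Hac : alpha a = alpha c).
      { rewrite <- (ghost_idem G1), <- (ghost_idem G2), <- !alpha_e, He. reflexivity. }
      assert (Hb : alpha b = alpha a) by (apply (Amono a b c); auto).
      apply El. right. unfold ghost_kernel. rewrite Hb. auto. }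
  set (g2 := fun u => beta (lam u)).
  set (g3 := fun u => mu (beta (lam u))).
  assert (C2 : convex leU g2).
  { intros a b c H1 H2 H3. unfold g2 in *. symmetry. apply Eb. apply Eb in H3.
    destruct H3 as [H3|[[G1 [G2 [m [m' [Gm [Gm' [Hm [Hm' Hmm]]]]]]]]|[[m1 [Gm1 [Hm1 Z1]]] [m2 [Gm2 [Hm2 Z2]]]]]].
    - left. symmetry. apply (C1 a b c); auto.
    - assert (Gam : ghost (alpha m)) by (destruct Gm as [t ->]; rewrite alpha_e; apply ghost_e).
      assert (Gam' : ghost (alpha m')) by (destruct Gm' as [t ->]; rewrite alpha_e; apply ghost_e).
      assert (Xa : alpha a = alpha m) by (apply L; auto).
      assert (Xc : alpha c = alpha m') by (apply L; auto).
      assert (Hb : alpha b = alpha a) by (apply (Amono a b c); congruence).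
      assert (Gb : ghost (alpha b)) by congruence.
      right; left. split; [exact G1|split].
      + rewrite (lamg b Gb), lm, le. apply ghost_e.
      + exists m, (mul ee b). split; [exact Gm|split; [apply ghost_e|split; [exact Hm|split]]].
        * symmetry. apply lamg; exact Gb.
        * rewrite alpha_e, (ghost_idem Gb). congruence.
    - assert (Ea : alpha (mul ee a) = zero).
      { rewrite <- Z1. apply L.
        - rewrite Hm1, lm, le. reflexivity.
        - rewrite Z1. exists zero. rewrite mulC, mul0. reflexivity. }
      assert (Ec : alpha (mul ee c) = zero).
      { rewrite <- Z2. apply L.
        - rewrite Hm2, lm, le. reflexivity.
        - rewrite Z2. exists zero. rewrite mulC, mul0. reflexivity. }
      assert (Eb' : alpha (mul ee b) = zero).
      { rewrite <- Ea. apply (Amono _ _ (mul ee c)); try apply mulE; auto. congruence. }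
      right; right. split.
      + exists m1; auto.
      + exists (mul ee b). split; [apply ghost_e|split; auto].
        rewrite lm, le. reflexivity. }
  assert (g3E : forall u, g3 u = g (alpha u)).
  { intros u. rewrite Hcomp. unfold g3. rewrite gr. reflexivity. }
  assert (C3 : convex leU g3).
  { intros a b c H1 H2 H3. rewrite !g3E in *.
    assert (Hac : alpha a = alpha c).
    { rewrite <- (rg (alpha a)), <- (rg (alpha c)). congruence. }
    rewrite (Amono a b c); auto. }
  assert (T2 : transmission g2) by (unfold g2; apply trans_comp; auto).
  assert (T3 : transmission g3) by (unfold g3; apply (@trans_comp _ _ _ (fun u => beta (lam u)) mu); auto).
  assert (S2 : surjective g2) by (unfold g2; apply surj_comp; auto).
  assert (S3 : surjective g3) by (unfold g3; apply (@surj_comp _ _ _ (fun u => beta (lam u)) mu); auto).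
  pose proof (ind_OST HU Tl Sl C1) as O1.
  pose proof (ind_OST HU T2 S2 C2) as O2.
  pose proof (ind_OST HU T3 S3 C3) as O3.
  exists (ind leU lam), (ind leU g2), (ind leU g3).
  split; [exact O1|split; [exact O2|split; [exact O3|split]]].
  { intros a b H. apply ind_mono; auto. }
  split; [eapply ind_through; [exact HU|exact O2|exact Sl|intros; reflexivity]|].
  split; [eapply ind_through; [exact HU|exact O3|exact S2|intros; reflexivity]|].
  intros x y [H|H].
  - subst. apply Vr.
  - destruct (S3 x) as [a <-]; destruct (S3 y) as [b <-].
    unfold g3. rewrite <- !Hcomp. apply Hmono. apply H; reflexivity.
Qed.
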